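(* Let $f$ be a convergent power series in $\mathbf z=(z_1,\dots,z_n)$ with $f(\mathbf 0)=0$, let $P,Q$ be strictly positive weight vectors with normalized weights $\hat P=P/d(P,f)=(\hat p_1,\dots,\hat p_n)$, $\hat Q=Q/d(Q,f)=(\hat q_1,\dots,\hat q_n)$, and for $0\le s\le1$ let $\hat R_s=s\hat P+(1-s)\hat Q=(\hat r_{s,1},\dots,\hat r_{s,n})$. (1) If $P,Q$ are admissible, then for all $i,j$ and $0<s<1$, $\eta_{ij}(\hat R_s)\le\max\{\eta_{ij}(\hat P),\eta_{ij}(\hat Q)\}$; in particular $\eta(\hat R_s)\le\max\{\eta(\hat P),\eta(\hat Q)\}$. (2) If $P,Q$ are $J$-admissible, then for all $i,j$ and $0<s<1$, $\eta'_{ij}(\hat R_s)\le\max\{\eta'_{ij}(\hat P),\eta'_{ij}(\hat Q)\}$.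
   Context: For a convergent power series $g=\sum c_\nu\mathbf z^\nu$, $\Gamma_+(g)$ is the convex hull of $\bigcup_{c_\nu\ne0}(\nu+\mathbb R_{\ge0}^n)$; for a weight $X=(x_1,\dots,x_n)\in\mathbb R_{\ge0}^n$, $d(X,g)=\min\{\sum x_i\nu_i:\nu\in\Gamma_+(g)\}$ and $\Delta(X,g)$ is the face where it is attained. A weight is strictly positive if all its entries are positive. $f_j=\partial f/\partial z_j$. $P,Q$ are admissible if $\Delta(P,f)\cap\Delta(Q,f)\ne\emptyset$, and $J$-admissible if moreover $\Delta(P,f_i)\cap\Delta(Q,f_i)\ne\emptyset$ for every $i$. For a strictly positive $X=(x_1,\dots,x_n)$: $\eta_{ij}(X)=(1-x_j)/x_i$, $\eta(X)=1/\min_kx_k-1$, and $\eta'_{ij}(X)=d(X,f_j)/x_i$. *)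

(* Defs.v *)
From HB Require Import structures.
From mathcomp Require Import all_boot all_order all_algebra.
From mathcomp Require Import all_classical all_reals.
From mathcomp Require Import complex.
Set Implicit Arguments. Unset Strict Implicit. Unset Printing Implicit Defensive.
Import Order.TTheory GRing.Theory Num.Theory.
Local Open Scope ring_scope.
Local Open Scope classical_set_scope.

Section Defs.
Variables (R : realType) (n : nat).

(* A (formal) power series in z = (z_1,...,z_n) with complex coefficients:
   the coefficient of z^nu, for a multi-index nu : 'I_n -> nat. *)
Definition pseries := ('I_n -> nat) -> R[i].

Definition cmod (z : R[i]) : R := Num.sqrt (complex.Re z ^+ 2 + complex.Im z ^+ 2).

Definition mdeg (nu : 'I_n -> nat) : nat := (\sum_(k < n) nu k)%N.

(* g is convergent: for some r > 0, sum_nu |c_nu| r^|nu| < oo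
   (absolute convergence of the series on the polydisc of radius r);
   the partial sums over the boxes {nu | nu_k < N} are bounded. *)
Definition convergent (g : pseries) : Prop :=
  exists r : R, 0 < r /\ exists M : R, forall N : nat,
    \sum_(nu : {ffun 'I_n -> 'I_N})
       cmod (g (fun k => nat_of_ord (nu k))) * r ^+ mdeg (fun k => nat_of_ord (nu k))
    <= M.

Definition vanishes_at_0 (g : pseries) : Prop := g (fun _ => 0%N) = 0.

(* partial derivative f_j = df/dz_j : coefficient of z^nu is (nu_j+1) c_{nu+e_j} *)
Definition pderiv (g : pseries) (j : 'I_n) : pseries :=
  fun nu => g (fun k => (nu k + (k == j))%N) *+ (nu j).+1.

Definition rvec := 'I_n -> R.

(* Newton polyhedron Gamma_+(g): convex hull of the union of nu + R_{>=0}^n,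
   c_nu <> 0 (finite convex combinations). *)
Definition newton_poly (g : pseries) : set rvec :=
  [set x | exists (m : nat) (w : 'I_m -> R) (pts : 'I_m -> ('I_n -> nat))
              (v : 'I_m -> rvec),
     (forall l, 0 <= w l) /\ \sum_(l < m) w l = 1 /\
     (forall l, g (pts l) != 0) /\ (forall l k, 0 <= v l k) /\
     (forall k, x k = \sum_(l < m) w l * ((pts l k)%:R + v l k))].

Definition dotw (X x : rvec) : R := \sum_(k < n) X k * x k.

Definition dval (X : rvec) (g : pseries) : R :=
  inf [set dotw X x | x in newton_poly g].

Definition face (X : rvec) (g : pseries) : set rvec :=
  [set x | newton_poly g x /\ dotw X x = dval X g].

Definition strictly_positive (X : rvec) : Prop := forall k, 0 < X k.

Definition admissible (f : pseries) (P Q : rvec) : Prop :=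
  face P f `&` face Q f !=set0.

Definition J_admissible (f : pseries) (P Q : rvec) : Prop :=
  admissible f P Q /\ forall i, face P (pderiv f i) `&` face Q (pderiv f i) !=set0.

Definition eta_ij (X : rvec) (i j : 'I_n) : R := (1 - X j) / X i.

Definition minw (X : rvec) : R := inf [set X k | k in [set: 'I_n]].

Definition eta_max (X : rvec) : R := (minw X)^-1 - 1.

Definition eta'_ij (f : pseries) (X : rvec) (i j : 'I_n) : R :=
  dval X (pderiv f j) / X i.

Definition normalized (f : pseries) (X : rvec) : rvec := fun k => X k / dval X f.

Definition segment (Ph Qh : rvec) (s : R) : rvec := fun k => s * Ph k + (1 - s) * Qh k.

End Defs.

(* Main.v *)
Require Import Defs.
From HB Require Import structures.
From mathcomp Require Import all_boot all_order all_algebra.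
From mathcomp Require Import all_classical all_reals.
From mathcomp Require Import complex.
From mathcomp Require Import ring lra.
Import Order.TTheory GRing.Theory Num.Theory.
Local Open Scope ring_scope.
Local Open Scope classical_set_scope.

Set Implicit Arguments.
Section H.
Variables (R : realType) (n : nat).

Lemma np_ge0 (g : pseries R n) x : newton_poly g x -> forall k, 0 <= x k.
Proof.
move=> [m [w [pts [v [w0 [_ [_ [v0 hx]]]]]]]] k.
rewrite hx; apply: sumr_ge0 => l _; apply: mulr_ge0 => //; apply: addr_ge0 => //.
Qed.

Lemma dot_ge0 (g : pseries R n) (X : rvec R n) x :
  (forall k, 0 <= X k) -> newton_poly g x -> 0 <= dotw X x.
Proof.
move=> X0 hx; apply: sumr_ge0 => k _; apply: mulr_ge0 => //. exact: (np_ge0 hx).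
Qed.

Lemma dval_le (g : pseries R n) (X : rvec R n) x :
  (forall k, 0 <= X k) -> newton_poly g x -> dval X g <= dotw X x.
Proof.
move=> X0 hx; apply: ge_inf; last by exists x.
exists 0 => _ [y hy <-]; exact: dot_ge0 hy.
Qed.

Lemma dval_eq (g : pseries R n) (X : rvec R n) x0 :
  newton_poly g x0 -> (forall x, newton_poly g x -> dotw X x0 <= dotw X x) ->
  dval X g = dotw X x0.
Proof.
move=> h0 hmin; apply/eqP; rewrite eq_le; apply/andP; split.
  apply: ge_inf; last by exists x0.
  by exists (dotw X x0) => _ [y hy <-]; exact: hmin.
by apply: lb_le_inf; [exists (dotw X x0); exists x0 | move=> _ [y hy <-]; exact: hmin].
Qed.

Lemma sum_pos (I : finType) (F : I -> R) i0 :
  (forall i, 0 <= F i) -> 0 < F i0 -> 0 < \sum_i F i.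
Proof.
move=> F0 Fi0; rewrite (bigD1 i0) //=.
have : 0 <= \sum_(i | i != i0) F i by apply: sumr_ge0.
lra.
Qed.

Lemma dot_gt0 (f : pseries R n) (X : rvec R n) x :
  vanishes_at_0 f -> strictly_positive X -> newton_poly f x -> 0 < dotw X x.
Proof.
move=> f0 Xp [m [w [pts [v [w0 [w1 [nz [v0 hx]]]]]]]].
rewrite /dotw (eq_bigr _ (fun k _ => congr1 (fun t => X k * t) (hx k))).
under eq_bigr => k _ do rewrite mulr_sumr.
rewrite exchange_big /=.
have [l wl] : exists l, 0 < w l.
  case: (pselect (exists l, 0 < w l)) => // H.
  have : \sum_(l < m) w l = 0.
    apply: big1 => l _; apply/eqP; rewrite eq_le w0 andbT leNgt.
    by apply/negP => h; apply: H; exists l.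
  by rewrite w1 => /eqP; rewrite oner_eq0.
apply: (@sum_pos _ _ l).
  move=> l'; apply: sumr_ge0 => k _.
  apply: mulr_ge0; [exact: ltW | apply: mulr_ge0; [exact: w0 | exact: addr_ge0]].
have [k pk] : exists k, (pts l k != 0)%N.
  case: (pselect (exists k, (pts l k != 0)%N)) => // H.
  have : pts l = (fun _ => 0%N).
    apply: boolp.funext => k; apply/eqP; rewrite -[_ == _]negbK; apply/negP => h.
    by apply: H; exists k.
  by move=> e; move: (nz l); rewrite e f0 eqxx.
apply: (@sum_pos _ _ k).
  move=> k'.
  apply: mulr_ge0; [exact: ltW | apply: mulr_ge0; [exact: w0 | exact: addr_ge0]].
apply: mulr_gt0 => //; apply: mulr_gt0 => //.
apply: ltr_pwDl => //; rewrite ltr0n lt0n //.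
Qed.

Lemma lf (s p q u v : R) : 0 < p -> 0 < q -> 0 < s < 1 ->
  (s * u + (1 - s) * v) / (s * p + (1 - s) * q) <= Num.max (u / p) (v / q).
Proof.
move=> p0 q0 /andP[s0 s1]; set M := Num.max _ _.
have hu : u <= M * p by rewrite -ler_pdivrMr // le_max lexx.
have hv : v <= M * q by rewrite -ler_pdivrMr // le_max lexx orbT.
have d0 : 0 < s * p + (1 - s) * q.
  by apply: addr_gt0; apply: mulr_gt0 => //; rewrite subr_gt0.
rewrite ler_pdivrMr //.
have : s * u <= s * (M * p) by rewrite ler_pM2l.
have : (1 - s) * v <= (1 - s) * (M * q) by rewrite ler_pM2l // subr_gt0.
nra.
Qed.

End H.

Lemma exists_argmin (R : realType) (n : nat) (X : 'I_n -> R) (k : 'I_n) :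
  exists k0, forall k', X k0 <= X k'.
Proof.
case: (@arg_minP _ R _ k xpredT X isT) => i _ H; exists i => k'; exact: H.
Qed.

Lemma minw_eq (R : realType) (n : nat) (X : rvec R n) k0 :
  (forall k, X k0 <= X k) -> minw X = X k0.
Proof.
move=> hmin; apply/eqP; rewrite eq_le; apply/andP; split.
  apply: ge_inf; last by exists k0.
  by exists (X k0) => _ [y _ <-]; exact: hmin.
by apply: lb_le_inf; [exists (X k0); exists k0 | move=> _ [y _ <-]; exact: hmin].
Qed.

Lemma dotw_norm (R : realType) (n : nat) (f : pseries R n) (X x : rvec R n) :
  dotw (normalized f X) x = dotw X x / dval X f.
Proof.
rewrite /dotw /normalized mulr_suml; apply: eq_bigr => k _; by rewrite mulrAC.
Qed.

Lemma dotw_seg (R : realType) (n : nat) (A B x : rvec R n) s :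
  dotw (segment A B s) x = s * dotw A x + (1 - s) * dotw B x.
Proof.
rewrite /dotw /segment !mulr_sumr -big_split; apply: eq_bigr => k _ /=.
by rewrite mulrDl !mulrA.
Qed.

Theorem lemma13 (R : realType) (n : nat) (f : pseries R n) (P Q : rvec R n) :
  convergent f -> vanishes_at_0 f ->
  strictly_positive P -> strictly_positive Q ->
  let Ph := normalized f P in
  let Qh := normalized f Q in
  (admissible f P Q ->
     forall (i j : 'I_n) (s : R), 0 < s < 1 ->
       eta_ij (segment Ph Qh s) i j <= Num.max (eta_ij Ph i j) (eta_ij Qh i j) /\
       eta_max (segment Ph Qh s) <= Num.max (eta_max Ph) (eta_max Qh)) /\
  (J_admissible f P Q ->
     forall (i j : 'I_n) (s : R), 0 < s < 1 ->
       eta'_ij f (segment Ph Qh s) i j <=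
         Num.max (eta'_ij f Ph i j) (eta'_ij f Qh i j)).
Proof.
move=> _ f0 Pp Qp Ph Qh.
have key : admissible f P Q -> 0 < dval P f /\ 0 < dval Q f.
  move=> [nu [[hn eP] [_ eQ]]]; rewrite -eP -eQ; split; [exact: (dot_gt0 f0 Pp hn) | exact: (dot_gt0 f0 Qp hn)].
have pos : admissible f P Q -> (forall k, 0 < Ph k) /\ (forall k, 0 < Qh k).
  move=> /key [a0 b0]; split => k; apply: divr_gt0 => //.
split.
  move=> adm i j s hs; have [Php Qhp] := pos adm.
  have [s0 s1] := andP hs.
  split.
    rewrite /eta_ij /segment.
    have -> : 1 - (s * Ph j + (1 - s) * Qh j) = s * (1 - Ph j) + (1 - s) * (1 - Qh j) by ring.
    exact: lf.
  case: (pselect (exists k : 'I_n, True)) => [[k _]|nok]; last first.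
    have E : forall X : rvec R n, minw X = 0.
      move=> X; rewrite /minw.
      have -> : [set X k | k in [set: 'I_n]] = set0.
        by apply/seteqP; split => // y [k _ _]; apply: nok; exists k.
      exact: inf0.
    by rewrite /eta_max !E maxxx.
  have [kR hR] := @exists_argmin R n (segment Ph Qh s) k.
  have [kP hP] := @exists_argmin R n Ph k.
  have [kQ hQ] := @exists_argmin R n Qh k.
  rewrite /eta_max (minw_eq _ _ hR) (minw_eq _ _ hP) (minw_eq _ _ hQ).
  have ge : s * Ph kP + (1 - s) * Qh kQ <= segment Ph Qh s kR.
    rewrite /segment; apply: lerD; rewrite ler_pM2l ?subr_gt0 //.
  have pkP := Php kP; have pkQ := Qhp kQ.
  rewrite le_max; case: (leP (Ph kP) (Qh kQ)) => c.
    have g1 : Ph kP <= segment Ph Qh s kR.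
      have : (1 - s) * Ph kP <= (1 - s) * Qh kQ by rewrite ler_pM2l ?subr_gt0.
      lra.
    have sp : 0 < segment Ph Qh s kR by exact: (lt_le_trans pkP g1).
    by apply/orP; left; rewrite lerD2r lef_pV2 ?posrE.
  have g1 : Qh kQ <= segment Ph Qh s kR.
    have : s * Qh kQ <= s * Ph kP by rewrite ler_pM2l // ltW.
    lra.
  have sp : 0 < segment Ph Qh s kR by exact: (lt_le_trans pkQ g1).
  by apply/orP; right; rewrite lerD2r lef_pV2 ?posrE.
move=> [adm Jadm] i j s hs; have [Php Qhp] := pos adm.
have [a0 b0] := key adm.
have [s0 s1] := andP hs.
have [nu [[hn eP] [_ eQ]]] := Jadm j.
have lP : forall x, newton_poly (pderiv f j) x -> dotw Ph nu <= dotw Ph x.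
  move=> x hx; rewrite /Ph !dotw_norm ler_pM2r ?invr_gt0 // eP.
  by apply: dval_le => // k; exact: ltW.
have lQ : forall x, newton_poly (pderiv f j) x -> dotw Qh nu <= dotw Qh x.
  move=> x hx; rewrite /Qh !dotw_norm ler_pM2r ?invr_gt0 // eQ.
  by apply: dval_le => // k; exact: ltW.
rewrite /eta'_ij (@dval_eq R n _ _ nu hn lP) (@dval_eq R n _ _ nu hn lQ) (@dval_eq R n _ _ nu hn).
  rewrite dotw_seg; exact: lf.
move=> x hx; rewrite !dotw_seg; apply: lerD; rewrite ler_pM2l ?subr_gt0 //; by [apply: lP | apply: lQ].
Qed.
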